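(* Let $n\geq 3$ and let $k\in\mathbb{Z}_n$ with $k\neq 0$ and $2k\not\equiv 0\pmod n$. Let $C$ be a subset of the vertex set of the generalized Petersen graph $\mathrm{GP}(n,k)$. Then $C$ is a perfect code in $\mathrm{GP}(n,k)$ if and only if $n\equiv 0\pmod 4$, $k\equiv 1\pmod 2$, and $$C=\{u_{4i+j},\,v_{4i+j+2}\mid i\in\mathbb{Z}_n\}$$ for some $j\in\{0,1,2,3\}$ (indices taken modulo $n$).
   Context: For an integer $n\geq 3$ and a nonzero $k\in\mathbb{Z}_n$, the generalized Petersen graph $\mathrm{GP}(n,k)$ is the simple graph with vertex set $\{u_i,v_i\mid i\in\mathbb{Z}_n\}$ ($2n$ vertices) and edges $u_iu_{i+1}$, $u_iv_i$, $v_iv_{i+k}$ for all $i\in\mathbb{Z}_n$ (all indices modulo $n$). Standing assumption: $2k\not\equiv 0\pmod n$, so that $\mathrm{GP}(n,k)$ is 3-regular. Since $k$ is only defined modulo $n$, a congruence such as $k\equiv 1\pmod 2$ with $n$ even is well defined. A perfect code in a graph $\Gamma$ is an independent set $C\subseteq V(\Gamma)$ such that every vertex not in $C$ is adjacent to exactly one vertex of $C$. *)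

(* Defs.v *)
From mathcomp Require Import all_boot.
Set Implicit Arguments. Unset Strict Implicit. Unset Printing Implicit Defensive.

(* The parameter k : nat is a representative of k in Z_n; all indices are
   taken modulo n. *)
Definition gp_vertex (n : nat) := (bool * 'I_n)%type.

Definition u_ (n : nat) (i : 'I_n) : gp_vertex n := (false, i).
Definition v_ (n : nat) (i : 'I_n) : gp_vertex n := (true, i).

Definition gp_adj (n k : nat) (x y : gp_vertex n) : bool :=
  match x, y with
  | (false, i), (false, j) => (j == (i + 1) %% n :> nat) || (i == (j + 1) %% n :> nat)
  | (false, i), (true, j) => i == j
  | (true, i), (false, j) => i == j
  | (true, i), (true, j) => (j == (i + k) %% n :> nat) || (i == (j + k) %% n :> nat)
  end.

Definition perfect_code (n k : nat) (C : {set gp_vertex n}) : Prop :=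
  (forall x y, x \in C -> y \in C -> ~~ gp_adj k x y) /\
  (forall x, x \notin C -> #|[set y in C | gp_adj k x y]| = 1).

Definition gp_code (n j : nat) : {set gp_vertex n} :=
  [set x : gp_vertex n |
     [exists i : 'I_n,
        if x.1 then (x.2 == (4 * i + j + 2) %% n :> nat)
        else (x.2 == (4 * i + j) %% n :> nat)]].

(* Main.v *)
Require Import Defs.
From mathcomp Require Import all_boot zify.
Set Implicit Arguments. Unset Strict Implicit. Unset Printing Implicit Defensive.


Lemma locL1 (F G : nat -> nat -> nat)
  (H1 : forall a b, F a b + F a.+1 b + F a.+2 b + G a.+1 b = 1)
  (H2 : forall a b, G a b + G a b.+1 + G a b.+2 + F a b.+1 = 1) :
  G 4 4 = 1 -> G 5 4 = 1 -> False.
Proof.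
move=> A B.
have := H2 4 2; have := H1 3 4; have := H2 4 3; have := H2 4 4; have := H2 5 2; have := H1 4 4; have := H2 5 3; have := H2 5 4; have := H1 3 3; have := H1 3 5; have := H1 4 3; have := H1 4 5; have := H1 5 3; have := H2 6 2; have := H1 5 4; have := H2 6 3; have := H1 5 5.
rewrite /=. lia.
Qed.

Lemma locL2 (F G : nat -> nat -> nat)
  (H1 : forall a b, F a b + F a.+1 b + F a.+2 b + G a.+1 b = 1)
  (H2 : forall a b, G a b + G a b.+1 + G a b.+2 + F a b.+1 = 1)
  (HN : forall a b, G a b + G a.+1 b <= 1) :
  F 4 4 = 1 -> F 7 4 = 1 -> False.
Proof.
move=> A B.
have := H1 2 3; have := H1 2 4; have := H2 3 3; have := H1 2 5; have := H2 3 4; have := H2 3 5; have := H1 3 3; have := H2 4 2; have := H1 3 4; have := H2 4 3; have := H1 3 5; have := H2 4 4; have := H1 3 6; have := H2 4 5; have := H2 4 6; have := H1 4 3; have := H1 4 4; have := H2 5 3; have := H1 4 5.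
have := H1 2 4; have := H1 3 4; have := H2 4 3; have := H1 4 4; have := H1 5 4; have := H1 6 4; have := H2 7 3; have := H2 4 2; have := H2 4 0; have := H1 3 2; have := H1 4 2; have := H1 5 2; have := H2 6 1; have := H2 6 2; have := H2 6 3; have := H1 5 5; have := H2 6 4; have := H2 6 5; have := H1 6 2; have := H2 7 1; have := H1 6 3; have := H2 7 2.
have := HN 3 4; have := HN 4 4; have := HN 5 4; have := HN 6 4; have := HN 3 2; have := HN 4 2.
rewrite /=. lia.
Qed.

Definition fb n (C : {set gp_vertex n}) (b : bool) (m : nat) : bool :=
  [exists i : 'I_n, (val i == m %% n) && ((b, i) \in C)].

Lemma fbE n (C : {set gp_vertex n}) b (i : 'I_n) m :
  val i = m %% n -> fb C b m = ((b, i) \in C).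
Proof.
move=> e; apply/existsP/idP => [[j /andP[/eqP ej Hj]]|H]; last by exists i; rewrite e eqxx.
by have -> : i = j by apply: val_inj; rewrite /= ej e.
Qed.

Lemma fb_mod n (C : {set gp_vertex n}) b m m' : m %% n = m' %% n -> fb C b m = fb C b m'.
Proof. by rewrite /fb => ->. Qed.

Lemma pc_closed n k (C : {set gp_vertex n}) :
  perfect_code k C <-> forall x : gp_vertex n, (x \in C) + #|[set y in C | gp_adj k x y]| = 1.
Proof.
split.
- case=> Hind Hdom x; case: (boolP (x \in C)) => Hx; last by rewrite Hdom.
  have -> : [set y in C | gp_adj k x y] = set0; last by rewrite cards0.
  apply/setP => y; rewrite !inE; apply/negbTE; apply/negP => /andP[Hy Ha].
  by move: (Hind x y Hx Hy); rewrite Ha.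
- move=> H; split.
  + move=> x y Hx Hy; apply/negP => Ha; have := H x; rewrite Hx.
    have : 0 < #|[set y in C | gp_adj k x y]| by apply/card_gt0P; exists y; rewrite inE Hy Ha.
    lia.
  + by move=> x Hx; have := H x; rewrite (negbTE Hx) add0n.
Qed.

Lemma card3 (T : finType) (C : {set T}) (P : pred T) (s : seq T) :
  uniq s -> (forall y, P y = (y \in s)) -> #|[set y in C | P y]| = count (fun z => z \in C) s.
Proof.
move=> us HP.
have -> : [set y in C | P y] = [set y in [seq z <- s | z \in C]].
  by apply/setP => y; rewrite !inE mem_filter HP.
rewrite cardsE (card_uniqP _) ?size_filter //; exact: filter_uniq.
Qed.

Lemma mod2n x n : x < n + n -> x %% n = if x < n then x else x - n.
Proof.
move=> h2; case: (ltnP x n) => h1; first by rewrite modn_small.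
by rewrite -{1}(subnK h1) modnDr modn_small //; lia.
Qed.

Lemma mod_shift n i j d : i < n -> j < n -> d <= n ->
  (i == (j + d) %% n) = (j == (i + n - d) %% n).
Proof.
move=> hi hj hd.
rewrite (mod2n (x := j + d)); last lia.
rewrite (mod2n (x := i + n - d)); last lia.
case: ifP => h1; case: ifP => h2; apply/eqP/eqP; lia.
Qed.

Lemma nb_u n k (C : {set gp_vertex n}) (i : 'I_n) : 3 <= n ->
  ((false,i) \in C) + #|[set y in C | gp_adj k (false,i) y]| =
  fb C false i + fb C false (i+1) + fb C false (i+n-1) + fb C true i.
Proof.
move=> n3; have n0 : 0 < n by lia.
pose a : 'I_n := Ordinal (ltn_pmod (i+1) n0).
pose c : 'I_n := Ordinal (ltn_pmod (i+n-1) n0).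
have hi := ltn_ord i.
rewrite (@card3 _ C _ [:: (false,a); (false,c); (true,i)]).
- rewrite /= (fbE C false (i:=i)) ?modn_small // (fbE C false (i:=a)) //.
  rewrite (fbE C false (i:=c)) // (fbE C true (i:=i)) ?modn_small //; lia.
- rewrite /= !inE !xpair_eqE /= andbT -val_eqE /=.
  rewrite (mod2n (x := i + 1)); last lia.
  rewrite (mod2n (x := i + n - 1)); last lia.
  by case: ifP => h1; case: ifP => h2; apply/eqP; lia.
- move=> [[] j]; rewrite /= !inE !xpair_eqE /=.
  + by rewrite eq_sym.
  + rewrite orbF (mod_shift (d := 1) hi (ltn_ord j)); last lia.
    by rewrite -!val_eqE.
Qed.

Lemma nb_v n k (C : {set gp_vertex n}) (i : 'I_n) : 3 <= n -> 0 < k < n -> ~~ (n %| k.*2) ->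
  ((true,i) \in C) + #|[set y in C | gp_adj k (true,i) y]| =
  fb C true i + fb C true (i+k) + fb C true (i+n-k) + fb C false i.
Proof.
move=> n3 hk h2k; have n0 : 0 < n by lia.
have hkn : k.*2 != n by apply: contraNneq h2k => ->.
pose a : 'I_n := Ordinal (ltn_pmod (i+k) n0).
pose c : 'I_n := Ordinal (ltn_pmod (i+n-k) n0).
have hi := ltn_ord i.
rewrite (@card3 _ C _ [:: (true,a); (true,c); (false,i)]).
- rewrite /= (fbE C true (i:=i)) ?modn_small // (fbE C true (i:=a)) //.
  rewrite (fbE C true (i:=c)) // (fbE C false (i:=i)) ?modn_small //; lia.
- rewrite /= !inE !xpair_eqE /= andbT -val_eqE /=.
  rewrite (mod2n (x := i + k)); last lia.
  rewrite (mod2n (x := i + n - k)); last lia.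
  by case: ifP => h1; case: ifP => h2; apply/eqP; lia.
- move=> [[] j]; rewrite /= !inE !xpair_eqE /=.
  + rewrite orbF (mod_shift (d := k) hi (ltn_ord j)); last lia.
    by rewrite -!val_eqE.
  + by rewrite eq_sym.
Qed.

Lemma pc_eqs n k (C : {set gp_vertex n}) : 3 <= n -> 0 < k < n -> ~~ (n %| k.*2) ->
  perfect_code k C ->
  (forall m, fb C false m + fb C false m.+1 + fb C false m.+2 + fb C true m.+1 = 1) /\
  (forall m, fb C true m + fb C true (m+k) + fb C true (m+k+k) + fb C false (m+k) = 1).
Proof.
move=> n3 hk h2k /pc_closed H; have n0 : 0 < n by lia.
split=> m.
- pose i : 'I_n := Ordinal (ltn_pmod m.+1 n0).
  have := H (false, i); rewrite nb_u //.
  have -> : fb C false i = fb C false m.+1 by apply: fb_mod; rewrite /= modn_mod.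
  have -> : fb C true i = fb C true m.+1 by apply: fb_mod; rewrite /= modn_mod.
  have -> : fb C false (i + 1) = fb C false m.+2.
    by apply: fb_mod; rewrite /= modnDml addn1.
  have -> : fb C false (i + n - 1) = fb C false m.
    apply: fb_mod; rewrite /= -addnBA // modnDml addnBA //.
    by rewrite (_ : m.+1 + n - 1 = m + n) ?modnDr //; lia.
  lia.
- pose i : 'I_n := Ordinal (ltn_pmod (m + k) n0).
  have := H (true, i); rewrite nb_v //.
  have -> : fb C false i = fb C false (m + k) by apply: fb_mod; rewrite /= modn_mod.
  have -> : fb C true i = fb C true (m + k) by apply: fb_mod; rewrite /= modn_mod.
  have -> : fb C true (i + k) = fb C true (m + k + k).
    by apply: fb_mod; rewrite /= modnDml.
  have -> : fb C true (i + n - k) = fb C true m.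
    apply: fb_mod; rewrite /= -addnBA; last lia.
    rewrite modnDml addnBA; last lia.
    by rewrite (_ : m + k + n - k = m + n) ?modnDr //; lia.
  lia.
Qed.

Lemma hper (n : nat) (h : nat -> nat) : (forall m, h (m + n) = h m) ->
  forall t m, h (m + t * n) = h m.
Proof.
move=> H; elim=> [|t IH] m; first by rewrite mul0n addn0.
by rewrite mulSnr addnA H IH.
Qed.

Section Comb.
Variables (n k : nat) (f g : nat -> nat).
Hypotheses (n0 : 0 < n) (kn : k < n)
  (fP : forall m, f (m + n) = f m) (gP : forall m, g (m + n) = g m)
  (E1 : forall m, f m + f m.+1 + f m.+2 + g m.+1 = 1)
  (E2 : forall m, g m + g (m+k) + g (m+k+k) + f (m+k) = 1).

Lemma fle1 m : f m <= 1. Proof. have := E1 m; lia. Qed.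
Lemma gle1 m : g m <= 1. Proof. have := E2 m; lia. Qed.

Lemma L1g p : g p + g p.+1 <= 1.
Proof.
pose p' := p + 8 * n - 4 - 4 * k.
pose F a b := f (p' + a + b * k).
pose G a b := g (p' + a + b * k).
have H1 : forall a b, F a b + F a.+1 b + F a.+2 b + G a.+1 b = 1.
  by move=> a b; rewrite /F /G !addnS !addSn; exact: E1.
have H2 : forall a b, G a b + G a b.+1 + G a b.+2 + F a b.+1 = 1.
  by move=> a b; rewrite /F /G !mulSnr !addnA; exact: E2.
have L := @locL1 F G H1 H2.
have A : G 4 4 = g p.
  by rewrite /G (_ : p' + 4 + 4 * k = p + 8 * n) ?(hper gP) //; rewrite /p'; lia.
have B : G 5 4 = g p.+1.
  by rewrite /G (_ : p' + 5 + 4 * k = p.+1 + 8 * n) ?(hper gP) //; rewrite /p'; lia.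
rewrite A B in L; have := gle1 p; have := gle1 p.+1; lia.
Qed.

Lemma L2g p : f p + f p.+3 <= 1.
Proof.
pose p' := p + 8 * n - 4 - 4 * k.
pose F a b := f (p' + a + b * k).
pose G a b := g (p' + a + b * k).
have H1 : forall a b, F a b + F a.+1 b + F a.+2 b + G a.+1 b = 1.
  by move=> a b; rewrite /F /G !addnS !addSn; exact: E1.
have H2 : forall a b, G a b + G a b.+1 + G a b.+2 + F a b.+1 = 1.
  by move=> a b; rewrite /F /G !mulSnr !addnA; exact: E2.
have HN : forall a b, G a b + G a.+1 b <= 1.
  by move=> a b; rewrite /G addnS addSn; exact: L1g.
have L := @locL2 F G H1 H2 HN.
have A : F 4 4 = f p.
  by rewrite /F (_ : p' + 4 + 4 * k = p + 8 * n) ?(hper fP) //; rewrite /p'; lia.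
have B : F 7 4 = f p.+3.
  by rewrite /F (_ : p' + 7 + 4 * k = p.+3 + 8 * n) ?(hper fP) //; rewrite /p'; lia.
rewrite A B in L; have := fle1 p; have := fle1 p.+3; lia.
Qed.

Lemma step4 p : f p = 1 -> f p.+4 = 1.
Proof.
move=> h; have := E1 p; have := E1 p.+1; have := E1 p.+2; have := L1g p.+2.
have := L2g p; lia.
Qed.

Lemma stepn p t : f p = 1 -> f (p + 4 * t) = 1.
Proof.
move=> h; elim: t => [|t IH]; first by rewrite muln0 addn0.
by rewrite (_ : p + 4 * t.+1 = (p + 4 * t).+4) ?step4 //; lia.
Qed.

Lemma fmodn m : f m = f (m %% n).
Proof. by rewrite {1}(divn_eq m n) addnC (hper fP). Qed.

Lemma exf : exists j0, f j0 = 1.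
Proof.
case: (boolP [exists i : 'I_n, f i == 1]) => [/existsP [i /eqP h]|]; first by exists i.
rewrite negb_exists => /forallP H0.
have f0 : forall m, f m = 0.
  move=> m; rewrite fmodn; have := H0 (Ordinal (ltn_pmod m n0)).
  have := fle1 (m %% n); rewrite /=; case: (f (m %% n)) => [|[|]] //.
have G1 : forall m, g m.+1 = 1 by move=> m; have := E1 m; rewrite !f0; lia.
have := E2 1; rewrite !add1n !addSn !G1 f0 //.
Qed.


Lemma n4 : n %% 4 = 0.
Proof.
have [j0 h] := exf.
have fa : f (j0 + 4 * (n %/ 4)) = 1 by apply: stepn.
have fb : f (j0 + 4 * (n %/ 4) + n %% 4) = 1.
  by rewrite (_ : j0 + 4 * (n %/ 4) + n %% 4 = j0 + n) ?fP //; lia.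
move: fa fb (ltn_pmod n (isT : 0 < 4)); set a := j0 + 4 * (n %/ 4).
case: (n %% 4) => [|[|[|[|r]]]] //= fa fb _.
- rewrite addn1 in fb; have := E1 a; lia.
- rewrite addn2 in fb; have := E1 a; lia.
- rewrite addn3 in fb; have := L2g a; lia.
Qed.

Lemma fback m : f m.+4 = 1 -> f m = 1.
Proof.
move=> h; have := stepn (n %/ 4).-1 h.
have := n4 => h4.
by rewrite (_ : m.+4 + 4 * (n %/ 4).-1 = m + n) ?fP //; lia.
Qed.

Lemma f4 m : f m.+4 = f m.
Proof.
have := fle1 m; have := fle1 m.+4; have := @step4 m; have := @fback m; lia.
Qed.

Lemma fmod4 m : f m = f (m %% 4).
Proof.
rewrite {1}(divn_eq m 4) addnC; elim: (m %/ 4) => [|t IH]; first by rewrite mul0n addn0.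
by rewrite (_ : m %% 4 + t.+1 * 4 = (m %% 4 + t * 4).+4) ?f4 //; lia.
Qed.

Lemma gcycle t j0 : f j0 = 1 -> g (j0 + 4 * t).+2 = 1.
Proof.
move=> h; have := stepn t h; set a := j0 + 4 * t => ha.
have := E1 a; have := E1 a.+1; have := L2g a; lia.
Qed.

Lemma kodd : odd k.
Proof.
have [j0 h] := exf; have h4 := n4.
case: (boolP (odd k)) => // hk; exfalso.
have k2 : k %% 2 = 0 by rewrite modn2; case: (odd k) hk.
have := E2 j0.+2; have := gcycle 0 h; rewrite muln0 addn0.
have [k0|k2'] : k %% 4 = 0 \/ k %% 4 = 2 by lia.
- have := gcycle (k %/ 4) h.
  rewrite (_ : (j0 + 4 * (k %/ 4)).+2 = j0.+2 + k); last lia.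
  lia.
- have := stepn (k %/ 4).+1 h.
  rewrite (_ : j0 + 4 * (k %/ 4).+1 = j0.+2 + k); last lia.
  lia.
Qed.

Lemma charf : exists2 j, j < 4 &
  (forall m, f m = (m %% 4 == j)) /\ (forall m, g m = (m %% 4 == (j + 2) %% 4)).
Proof.
have [j0 h] := exf; have h4 := n4.
have hj : j0 %% 4 < 4 by apply: ltn_pmod.
have fj : f (j0 %% 4) = 1 by rewrite -fmod4.
have b1 := E1 0; have b2 := E1 1; have b3 := L2g 0.
have fr : forall r, r < 4 -> f r = (r == j0 %% 4).
  move: hj fj; case: (j0 %% 4) => [|[|[|[|j]]]] //= _ fj;
  case=> [|[|[|[|r]]]] //= _; lia.
have fE : forall m, f m = (m %% 4 == j0 %% 4).
  by move=> m; rewrite fmod4 fr // ltn_pmod.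
exists (j0 %% 4) => //; split=> // m.
rewrite -gP (_ : m + n = (m + n - 1).+1); last lia.
have := E1 (m + n - 1); rewrite !fE.
have -> : (m + n - 1) %% 4 = (m %% 4 + 3) %% 4 by lia.
have -> : (m + n - 1).+1 %% 4 = m %% 4 by lia.
have -> : (m + n - 1).+2 %% 4 = (m %% 4 + 1) %% 4 by lia.
have := ltn_pmod m (isT : 0 < 4).
move: hj; case: (j0 %% 4) => [|[|[|[|j]]]] //= _;
case: (m %% 4) => [|[|[|[|r]]]] //= _; lia.
Qed.

End Comb.

Lemma code_mem n j (i : 'I_n) b : n %% 4 = 0 -> 0 < n -> j < 4 ->
  ((b, i) \in gp_code n j) = (i %% 4 == (if b then (j + 2) %% 4 else j)).
Proof.
move=> h4 n0 hj; have d4 : 4 %| n by rewrite /dvdn h4.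
have hi := ltn_ord i.
rewrite inE /=; apply/existsP/eqP.
- case=> t; case: b => /= /eqP ->; rewrite modn_dvdm //; lia.
- case: b => /= H.
  + have ht : (i + n - j - 2) %/ 4 < n by lia.
    exists (Ordinal ht) => /=.
    rewrite (_ : 4 * ((i + n - j - 2) %/ 4) + j + 2 = i + n); last lia.
    by rewrite modnDr modn_small.
  + have ht : i %/ 4 < n by lia.
    exists (Ordinal ht) => /=.
    rewrite (_ : 4 * (i %/ 4) + j = i); last lia.
    by rewrite modn_small.
Qed.

Lemma fb_code n j b m : n %% 4 = 0 -> 0 < n -> j < 4 ->
  fb (gp_code n j) b m = (m %% 4 == (if b then (j + 2) %% 4 else j)).
Proof.
move=> h4 n0 hj; have d4 : 4 %| n by rewrite /dvdn h4.
by rewrite (@fbE _ _ _ (Ordinal (ltn_pmod m n0))) // code_mem //= modn_dvdm.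
Qed.

Lemma rev_dir n k j : 3 <= n -> 0 < k < n -> ~~ (n %| k.*2) -> n %% 4 = 0 -> odd k -> j < 4 ->
  perfect_code k (gp_code n j).
Proof.
move=> n3 hk h2k h4 ko hj; have n0 : 0 < n by lia.
have k2 : k %% 2 = 1 by rewrite modn2 ko.
apply/pc_closed => -[[] i].
- rewrite nb_v // !fb_code //=.
  have -> : (i + k) %% 4 = (i %% 4 + k %% 4) %% 4 by lia.
  have -> : (i + n - k) %% 4 = (i %% 4 + (4 - k %% 4)) %% 4 by lia.
  have : k %% 4 = 1 \/ k %% 4 = 3 by lia.
  have := ltn_pmod i (isT : 0 < 4).
  move: hj; case: j => [|[|[|[|j]]]] //= _;
  case: (i %% 4) => [|[|[|[|r]]]] //= _; by case=> ->.
- rewrite nb_u // !fb_code //=.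
  have -> : (i + 1) %% 4 = (i %% 4 + 1) %% 4 by lia.
  have -> : (i + n - 1) %% 4 = (i %% 4 + 3) %% 4 by lia.
  have := ltn_pmod i (isT : 0 < 4).
  move: hj; case: j => [|[|[|[|j]]]] //= _;
  by case: (i %% 4) => [|[|[|[|r]]]].
Qed.

Unset Implicit Arguments.

Theorem theorem1p1 (n k : nat) (C : {set gp_vertex n}) :
  3 <= n -> 0 < k < n -> ~~ (n %| k.*2) ->
  perfect_code k C <->
  [/\ n %% 4 = 0, odd k & exists2 j, j < 4 & C = gp_code n j].
Proof.
move=> n3 hk h2k; have n0 : 0 < n by lia.
have kn : k < n by lia.
split; last by case=> h4 ko [j hj ->]; exact: rev_dir.
move=> pc; have [E1 E2] := pc_eqs n3 hk h2k pc.
pose f m := nat_of_bool (fb C false m).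
pose g m := nat_of_bool (fb C true m).
have fP : forall m, f (m + n) = f m by move=> m; rewrite /f (@fb_mod _ _ _ _ m) // modnDr.
have gP : forall m, g (m + n) = g m by move=> m; rewrite /g (@fb_mod _ _ _ _ m) // modnDr.
have h4 := @n4 n k f g n0 kn fP gP E1 E2.
have ko := @kodd n k f g n0 kn fP gP E1 E2.
have [j hj [fE gE]] := @charf n k f g n0 kn fP gP E1 E2.
split=> //; exists j => //.
apply/setP => -[b i]; rewrite code_mem //.
rewrite -(@fbE _ _ _ i i); last by rewrite modn_small.
case: b.
- have := gE i; rewrite /g; case: (fb C true i); case: (_ == _) => //.
- have := fE i; rewrite /f; case: (fb C false i); case: (_ == _) => //.
Qed.
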